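(* Let $\mathcal{F}$ be a set of connected graphs with $P_{2}\in\mathcal{F}$, and let $G$ be a finite simple graph. If $b_{\mathcal{F}}(G-X)\leq |X|$ for all $X\subseteq V(G)$, then $G$ has an $\mathcal{F}$-factor.
   Context: A graph $H$ is hypomatchable if $H-u$ has a perfect matching for every $u\in V(H)$ (in particular $K_1$ is hypomatchable). For a set $\mathcal{F}$ of connected graphs, an $\mathcal{F}$-factor of a graph is a spanning subgraph each of whose components is isomorphic to a member of $\mathcal{F}$. For a graph $H$, $b_{\mathcal{F}}(H)$ denotes the number of connected components of $H$ that are hypomatchable and have no $\mathcal{F}$-factor. $P_2$ is the path on two vertices. *)

(* Defs.v *)
From Stdlib Require Import ClassicalEpsilon.
From HB Require Import structures.
From mathcomp Require Import all_boot.

Set Implicit Arguments. Unset Strict Implicit. Unset Printing Implicit Defensive.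

Definition asbool (P : Prop) : bool :=
  if excluded_middle_informative P then true else false.

Record sgraph := FGraph {
  fg_V : finType;
  fg_E : rel fg_V;
  fg_sym : symmetric fg_E;
  fg_irr : irreflexive fg_E }.

Definition connected_sgraph (H : sgraph) : Prop :=
  0 < #|fg_V H| /\ forall x y : fg_V H, connect (@fg_E H) x y.

Definition fg_iso (H1 H2 : sgraph) : Prop :=
  exists g : fg_V H1 -> fg_V H2,
    bijective g /\ forall a b, fg_E (g a) (g b) = fg_E a b.

Lemma P2_sym : symmetric (fun x y : bool => x != y).
Proof. by move=> x y; rewrite eq_sym. Qed.
Lemma P2_irr : irreflexive (fun x y : bool => x != y).
Proof. by move=> x; rewrite eqxx. Qed.
Definition P2 : sgraph := FGraph P2_sym P2_irr.

Definition iso_on (V : finType) (f : rel V) (C : {set V}) (H : sgraph) : Prop :=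
  exists g : fg_V H -> V,
    [/\ injective g,
        (forall v, v \in C <-> exists a, g a = v) &
        forall a b, f (g a) (g b) = fg_E a b].

Definition has_Ffactor (F : sgraph -> Prop) (V : finType) (e : rel V)
    (S : {set V}) : Prop :=
  exists f : rel V,
    [/\ symmetric f,
        (forall x y, f x y -> [&& x \in S, y \in S & e x y]) &
        forall x, x \in S ->
          exists H, F H /\ iso_on f [set y | connect f x y] H].

Definition induced (V : finType) (e : rel V) (S : {set V}) : rel V :=
  fun x y => [&& x \in S, y \in S & e x y].

Definition has_perfect_matching (V : finType) (e : rel V) (S : {set V}) : Prop :=
  exists M : {set {set V}},
    (forall A, A \in M -> exists x y,
        [/\ x \in S, y \in S, e x y & A = [set x; y]]) /\
    (forall x, x \in S -> exists! A, A \in M /\ x \in A).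

Definition hypomatchable (V : finType) (e : rel V) (C : {set V}) : Prop :=
  forall u, u \in C -> has_perfect_matching e (C :\ u).

Definition is_component (V : finType) (e : rel V) (S C : {set V}) : Prop :=
  exists2 x, x \in S & C = [set y | connect (induced e S) x y].

Definition bF (F : sgraph -> Prop) (V : finType) (e : rel V) (S : {set V}) : nat :=
  #|[set C : {set V} | asbool (is_component e S C /\ hypomatchable e C
                                /\ ~ has_Ffactor F e C)]|.

(* Main.v *)
Require Import Defs.
From mathcomp Require Import all_boot.
From Stdlib Require Import ClassicalEpsilon.
From mathcomp Require Import zify.
Set Implicit Arguments. Unset Strict Implicit. Unset Printing Implicit Defensive.

Lemma asboolE (P : Prop) : asbool P = true <-> P.
Proof. by rewrite /asbool; case: excluded_middle_informative. Qed.

Section Hall.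
Variables TA TB : finType.

Definition NB (R : TA -> TB -> bool) (W : {set TA}) : {set TB} :=
  [set b | [exists a in W, R a b]].

Lemma hall_ind n : forall (R : TA -> TB -> bool) (A : {set TA}), #|A| < n ->
  (forall W : {set TA}, W \subset A -> #|W| <= #|NB R W|) ->
  exists phi : TA -> option TB, {in A &, injective phi} /\
     forall a, a \in A -> exists2 b, phi a = Some b & R a b.
Proof.
elim: n => [//|n IH] R A An HR.
case: (boolP [exists W : {set TA}, [&& W \proper A, W != set0 & #|NB R W| <= #|W|]]).
- case/existsP=> W0 /and3P[W0A W0n W0N].
  have W0sA : W0 \subset A by apply: proper_sub.
  have [phi1 [inj1 R1]] : exists phi : TA -> option TB, {in W0 &, injective phi} /\
     forall a, a \in W0 -> exists2 b, phi a = Some b & R a b.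
    apply: IH; first by have := proper_card W0A; lia.
    by move=> W WW0; apply: HR; apply: subset_trans W0sA.
  set R2 := fun a b => R a b && (b \notin NB R W0).
  have [phi2 [inj2 R2P]] : exists phi : TA -> option TB, {in A :\: W0 &, injective phi} /\
     forall a, a \in A :\: W0 -> exists2 b, phi a = Some b & R2 a b.
    apply: IH.
      rewrite cardsDS //. have: 0 < #|W0|.
        by rewrite lt0n cards_eq0.
      move: An; have := subset_leq_card W0sA; lia.
    move=> W WA.
    have WW0A : W :|: W0 \subset A.
      by rewrite subUset W0sA andbT; apply: subset_trans WA (subsetDl _ _).
    have H1 := HR _ WW0A.
    have disj : #|W :|: W0| = #|W| + #|W0|.
      rewrite cardsU.
      suff -> : W :&: W0 = set0 by rewrite cards0 subn0.
      apply/setP=> x; rewrite !inE; apply/negP=> /andP[xW xW0].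
      by move/subsetP: WA => /(_ x xW); rewrite !inE xW0.
    have H2 : NB R (W :|: W0) \subset NB R2 W :|: NB R W0.
      apply/subsetP=> b; rewrite !inE => /existsP[a /andP[]].
      rewrite inE => /orP[aW|aW0] Rab.
        case bN: (b \in NB R W0); first by rewrite inE in bN; rewrite bN orbT.
        by apply/orP; left; apply/existsP; exists a; rewrite aW /R2 Rab bN.
      by apply/orP; right; apply/existsP; exists a; rewrite aW0.
    have H3 := subset_leq_card H2.
    have H4 := leq_card_setU (NB R2 W) (NB R W0); move: H4 => [H4 _].
    lia.
  exists (fun a => if a \in W0 then phi1 a else phi2 a); split.
    move=> a1 a2 a1A a2A /=.
    case a1W: (a1 \in W0); case a2W: (a2 \in W0).
    + by apply: inj1.
    + have a2D : a2 \in A :\: W0 by rewrite inE a2W a2A.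
      case: (R1 a1 a1W) => b1 -> Rb1; case: (R2P a2 a2D) => b2 -> /andP[_ nb2] [eb].
      by move: nb2; rewrite -eb inE; case/negP; apply/existsP; exists a1; rewrite a1W.
    + have a1D : a1 \in A :\: W0 by rewrite inE a1W a1A.
      case: (R1 a2 a2W) => b1 -> Rb1; case: (R2P a1 a1D) => b2 -> /andP[_ nb2] [eb].
      by move: nb2; rewrite eb inE; case/negP; apply/existsP; exists a2; rewrite a2W.
    + by apply: inj2; rewrite inE ?a1W ?a2W.
  move=> a aA; case aW: (a \in W0); first exact: R1.
  have aD : a \in A :\: W0 by rewrite inE aW aA.
  by case: (R2P a aD) => b -> /andP[]; exists b.
- rewrite negb_exists => /forallP Hall1.
  case: (set_0Vmem A) => [->|[a0 a0A]].
    by exists (fun _ => None); split=> [a1 a2|a]; rewrite inE.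
  have : #|[set a0]| <= #|NB R [set a0]| by apply: HR; rewrite sub1set.
  rewrite cards1 card_gt0 => /set0Pn[b0]; rewrite inE => /existsP[a /andP[]].
  rewrite inE => /eqP -> Rb0.
  set R' := fun a b => R a b && (b != b0).
  have [phi' [inj' R'P]] : exists phi : TA -> option TB, {in A :\ a0 &, injective phi} /\
     forall a, a \in A :\ a0 -> exists2 b, phi a = Some b & R' a b.
    apply: IH.
      by move: An; rewrite (cardsD1 a0 A) a0A.
    move=> W WA.
    case: (set_0Vmem W) => [->|[w wW]]; first by rewrite cards0.
    have Wp : W \proper A.
      rewrite properE (subset_trans WA (subsetDl _ _)) /=.
      apply/negP=> /subsetP /(_ a0 a0A) a0W.
      by move/subsetP: WA => /(_ a0 a0W); rewrite !inE eqxx.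
    have Wn : W != set0 by apply/set0Pn; exists w.
    have := Hall1 W; rewrite Wp Wn /= -ltnNge => HW.
    have H2 : NB R W \subset b0 |: NB R' W.
      apply/subsetP=> b; rewrite !inE => /existsP[a1 /andP[aW Rab]].
      case: eqP => //= nb; apply/existsP; exists a1; rewrite aW /R' Rab.
      by apply/eqP.
    have := subset_leq_card H2; rewrite cardsU1.
    case: (b0 \notin NB R' W) => /=; lia.
  exists (fun a => if a == a0 then Some b0 else phi' a); split.
    move=> a1 a2 a1A a2A /=.
    case: (eqVneq a1 a0) => [->|n1]; case: (eqVneq a2 a0) => [->|n2] //.
    + have a2D : a2 \in A :\ a0 by rewrite !inE n2 a2A.
      by case: (R'P a2 a2D) => b -> /andP[_ nb] [eb]; move: nb; rewrite eb eqxx.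
    + have a1D : a1 \in A :\ a0 by rewrite !inE n1 a1A.
      by case: (R'P a1 a1D) => b -> /andP[_ nb] [eb]; move: nb; rewrite eb eqxx.
    + by apply: inj'; rewrite !inE ?n1 ?n2.
  move=> c aA; case: (eqVneq c a0) => [->|na]; first by exists b0.
  have aD : c \in A :\ a0 by rewrite !inE na aA.
  by case: (R'P c aD) => b -> /andP[]; exists b.
Qed.
End Hall.

Section G.
Variables (V : finType) (e : rel V).
Hypothesis esym : symmetric e.
Hypothesis eirr : irreflexive e.
Implicit Types (S T X Y K C : {set V}) (x y z : V).

Definition comp (T : {set V}) x := [set y | connect (induced e T) x y].

Lemma induced_sym T : symmetric (induced e T).
Proof. by move=> x y; rewrite /induced esym; case: (x \in T); case: (y \in T). Qed.

Lemma connect_fw (r : rel V) (A : {set V}) x y :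
  (forall a b, a \in A -> r a b -> b \in A) -> x \in A -> connect r x y -> y \in A.
Proof.
move=> cl xA /connectP[p pp ->]; elim: p x xA pp => [//|z p IH] x xA /= /andP[rxz pz].
exact: IH (cl _ _ xA rxz) pz.
Qed.

Lemma connect_restr (r r' : rel V) (A : {set V}) x y :
  (forall a b, a \in A -> r a b -> (b \in A) && r' a b) -> x \in A ->
  connect r x y -> connect r' x y.
Proof.
move=> cl xA /connectP[p pp ->]; elim: p x xA pp => [|z p IH] x xA /=.
  by rewrite connect0.
case/andP=> rxz pz; case/andP: (cl _ _ xA rxz) => zA r'xz.
exact: connect_trans (connect1 r'xz) (IH _ zA pz).
Qed.

Lemma comp_closed T x a b : a \in comp T x -> induced e T a b -> b \in comp T x.
Proof. by rewrite !inE => xa ab; apply: connect_trans xa (connect1 ab). Qed.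

Lemma comp_self T x : x \in comp T x.
Proof. by rewrite inE connect0. Qed.

Lemma comp_subT T x : x \in T -> comp T x \subset T.
Proof.
move=> xT; apply/subsetP => y; rewrite inE; apply: connect_fw => //.
by move=> a b _ /and3P[].
Qed.

Lemma comp_eq T x y : y \in comp T x -> comp T y = comp T x.
Proof.
rewrite inE => xy; apply/setP => z; rewrite !inE.
by rewrite (same_connect (sym_connect_sym (induced_sym T)) xy).
Qed.

Lemma comp_char T C x : x \in C -> (forall y, y \in C -> connect (induced e T) x y) ->
  (forall a b, a \in C -> induced e T a b -> b \in C) -> C = comp T x.
Proof.
move=> xC Hc cl; apply/setP => y; rewrite inE; apply/idP/idP; first exact: Hc.
exact: connect_fw.
Qed.

Lemma is_compP T C : is_component e T C <-> exists2 x, x \in T & C = comp T x.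
Proof. by []. Qed.

Lemma comp_of T x : x \in T -> is_component e T (comp T x).
Proof. by move=> xT; exists x. Qed.

Lemma comp_in T C : is_component e T C -> C \subset T.
Proof. by case/is_compP => x xT ->; apply: comp_subT. Qed.

Lemma comp_mem T C x : is_component e T C -> x \in C -> C = comp T x.
Proof. by case/is_compP => y yT -> xC; rewrite (comp_eq xC). Qed.

Lemma comp_disj T C1 C2 z : is_component e T C1 -> is_component e T C2 ->
  z \in C1 -> z \in C2 -> C1 = C2.
Proof. by move=> c1 c2 z1 z2; rewrite (comp_mem c1 z1) (comp_mem c2 z2). Qed.

Lemma comp_grow (S X Y : {set V}) C : is_component e (S :\: X) C -> Y \subset X ->
  (forall c z, c \in C -> z \in X -> z \notin Y -> ~~ e c z) ->
  is_component e (S :\: Y) C.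
Proof.
case/is_compP => x xSX -> YX noe.
have sub := setDS S YX.
exists x; first exact: (subsetP sub).
apply: comp_char; first exact: comp_self.
  move=> y; rewrite inE; apply: connect_sub => a b /and3P[aS bS eab].
  by apply: connect1; rewrite /induced (subsetP sub _ aS) (subsetP sub _ bS).
move=> a b aC /and3P[aSY bSY eab].
have aSX := subsetP (comp_subT xSX) _ aC.
case bX: (b \in X).
  move: bSY; rewrite inE => /andP[bY _].
  by move: (noe a b aC bX bY); rewrite eab.
apply: comp_closed aC _; rewrite /induced aSX eab andbT.
by move: bSY; rewrite !inE bX => /andP[_ ->].
Qed.

Lemma comp_shrink T (T' : {set V}) C : is_component e T C -> C \subset T' -> T' \subset T ->
  is_component e T' C.
Proof.
case/is_compP => x xT -> CT' T'T.
exists x; first exact: (subsetP CT' _ (comp_self T x)).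
apply: comp_char; first exact: comp_self.
  move=> y; rewrite inE; apply: (connect_restr (A := comp T x)); last exact: comp_self.
  move=> a b aC ab; have bC := comp_closed aC ab; rewrite bC /induced.
  by rewrite (subsetP CT' _ aC) (subsetP CT' _ bC); case/and3P: ab.
move=> a b aC /and3P[aT' bT' eab]; apply: comp_closed aC _.
by rewrite /induced (subsetP T'T _ aT') (subsetP T'T _ bT').
Qed.

Lemma comp_nest S X Y K C : is_component e (S :\: X) K -> Y \subset K ->
  is_component e (K :\: Y) C -> is_component e (S :\: (X :|: Y)) C.
Proof.
move=> Kc YK /is_compP[x xKY ->].
have KS := comp_in Kc.
have sub : K :\: Y \subset S :\: (X :|: Y).
  apply/subsetP=> z; rewrite !inE => /andP[zY zK].
  by move: (subsetP KS z zK) zY; rewrite !inE; case: (z \in X); case: (z \in Y); case: (z \in S).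
exists x; first exact: (subsetP sub).
apply: comp_char; first exact: comp_self.
  move=> y; rewrite inE; apply: connect_sub => a b /and3P[aS bS eab].
  by apply: connect1; rewrite /induced (subsetP sub _ aS) (subsetP sub _ bS).
move=> a b aC /and3P[aS bS eab].
have aKY := subsetP (comp_subT xKY) _ aC.
have aK : a \in K by move: aKY; rewrite inE => /andP[].
have bSX : b \in S :\: X by move: bS; rewrite !inE negb_or => /andP[/andP[-> _] ->].
have bK : b \in K.
  rewrite (comp_mem Kc aK); apply: (@comp_closed _ a a); first exact: comp_self.
  by rewrite /induced bSX eab (subsetP KS _ aK).
apply: comp_closed aC _; rewrite /induced aKY eab andbT inE bK andbT.
by move: bS; rewrite !inE negb_or => /andP[/andP[_ ->]].
Qed.

Definition cnt (P : {set V} -> Prop) T :=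
  #|[set C | asbool (is_component e T C /\ P C)]|.

Lemma cnt_mono (P Q : {set V} -> Prop) T : (forall C, P C -> Q C) -> cnt P T <= cnt Q T.
Proof.
move=> PQ; apply: subset_leq_card; apply/subsetP => C; rewrite !inE.
by move/asboolE => [c /PQ q]; apply/asboolE.
Qed.

Lemma cnt_ge (P : {set V} -> Prop) T (W : {set {set V}}) :
  (forall C, C \in W -> is_component e T C /\ P C) -> #|W| <= cnt P T.
Proof.
move=> HW; apply: subset_leq_card; apply/subsetP => C CW; rewrite inE.
by apply/asboolE; apply: HW.
Qed.


Lemma glue F (I : finType) (Ix : {set I}) (blk : I -> {set V}) S :
  (forall i j z, i \in Ix -> j \in Ix -> z \in blk i -> z \in blk j -> i = j) ->
  (forall z, z \in S <-> exists2 i, i \in Ix & z \in blk i) ->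
  (forall i, i \in Ix -> has_Ffactor F e (blk i)) -> has_Ffactor F e S.
Proof.
move=> disj cov Hf.
have ex i : exists f : rel V, i \in Ix -> [/\ symmetric f,
    (forall x y, f x y -> [&& x \in blk i, y \in blk i & e x y]) &
    forall x, x \in blk i -> exists H, F H /\ iso_on f [set y | connect f x y] H].
  case iIx: (i \in Ix); last by exists (fun _ _ => false).
  by case: (Hf i iIx) => f Hff; exists f.
pose fam i := proj1_sig (constructive_indefinite_description _ (ex i)).
have famP i : i \in Ix -> [/\ symmetric (fam i),
    (forall x y, fam i x y -> [&& x \in blk i, y \in blk i & e x y]) &
    forall x, x \in blk i -> exists H, F H /\ iso_on (fam i) [set y | connect (fam i) x y] H].
  exact: (proj2_sig (constructive_indefinite_description _ (ex i))).
pose f x y := [exists i in Ix, fam i x y].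
have fE i a b : i \in Ix -> a \in blk i -> f a b = fam i a b.
  move=> iIx ai; apply/existsP/idP => [[j /andP[jIx fj]]|fi]; last by exists i; rewrite iIx.
  have [_ fjP _] := famP j jIx; case/and3P: (fjP _ _ fj) => aj _ _.
  by rewrite (disj i j a iIx jIx ai aj).
exists f; split.
- move=> x y; apply/existsP/existsP => [][i /andP[iIx fi]]; exists i;
    have [sy _ _] := famP i iIx.
    by rewrite iIx (sy y x).
  by rewrite iIx (sy x y).
- move=> x y /existsP[i /andP[iIx fi]]; have [_ fP _] := famP i iIx.
  case/and3P: (fP _ _ fi) => xi yi exy; rewrite exy andbT.
  by apply/andP; split; apply/cov; exists i.
- move=> x /cov[i iIx xi]; have [_ fP fC] := famP i iIx.
  case: (fC x xi) => H [FH [g [ginj gim gE]]].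
  have inblk y : connect (fam i) x y -> y \in blk i.
    apply: connect_fw xi => a b _ fab.
    by case/and3P: (fP _ _ fab).
  have compE : [set y | connect f x y] = [set y | connect (fam i) x y].
    apply/setP=> y; rewrite !inE; apply/idP/idP.
      apply: (connect_restr (A := blk i)) => // a b ai fab.
      rewrite (fE i a b iIx ai) in fab.
      by rewrite fab andbT; case/and3P: (fP _ _ fab).
    apply: connect_sub => a b fab; apply: connect1.
    by apply/existsP; exists i; rewrite iIx.
  exists H; split => //; exists g; split => //.
    by move=> v; rewrite compE; apply: gim.
  move=> a b.
  have ga : g a \in blk i.
    by apply: inblk; move: (proj2 (gim (g a)) (ex_intro _ a erefl)); rewrite inE.
  by rewrite (fE i _ _ iIx ga) gE.
Qed.

Lemma iso_refl_P2 : fg_iso P2 P2.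
Proof. by exists id; split => //; exists id. Qed.

Lemma pair_factor F H2 x y : F H2 -> fg_iso H2 P2 -> e x y ->
  has_Ffactor F e [set x; y].
Proof.
move=> FH2 [g0 [[h g0h hg0] gE]] exy.
have xy : x != y by apply/eqP => exy'; move: exy; rewrite exy' eirr.
pose f a b := ((a == x) && (b == y)) || ((a == y) && (b == x)).
have fin a b : f a b -> (a \in [set x; y]) && (b \in [set x; y]).
  by rewrite /f !inE; case/orP => /andP[/eqP-> /eqP->]; rewrite !eqxx ?orbT.
exists f; split.
- by move=> a b; rewrite /f; case: (a == x); case: (a == y); case: (b == x); case: (b == y).
- move=> a b fab; case/andP: (fin a b fab) => -> ->.
  by move: fab; rewrite /f; case/orP => /andP[/eqP-> /eqP->] //; rewrite esym.
- move=> z zin.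
  have compE : [set w | connect f z w] = [set x; y].
    apply/setP => w; rewrite [in LHS]inE; apply/idP/idP.
      by apply: connect_fw zin => a b _ /fin /andP[].
    move=> win; case: (eqVneq w z) => [->|wz]; first exact: connect0.
    apply: connect1; move: zin win wz; rewrite /f !inE.
    by case/orP => /eqP->; case/orP => /eqP->; rewrite ?eqxx //= (negbTE xy) // eq_sym (negbTE xy).
  exists H2; split => //; rewrite compE.
  exists (fun a => if g0 a then x else y); split.
  + move=> a1 a2 /=; apply: contra_eq => ne.
    have : g0 a1 != g0 a2 by apply: contra ne => /eqP/(can_inj g0h) ->.
    by case: (g0 a1); case: (g0 a2) => //= _; rewrite ?xy // eq_sym xy.
  + move=> v; rewrite !inE; split.
      case/orP=> /eqP->; [exists (h true) | exists (h false)]; by rewrite hg0.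
    by case=> a <-; case: (g0 a); rewrite eqxx ?orbT.
  + move=> a b; rewrite -gE /= /f.
    case: (g0 a); case: (g0 b); rewrite !eqxx ?(negbTE xy) //= eq_sym (negbTE xy) //.
Qed.

Lemma pm_factor F H2 T : F H2 -> fg_iso H2 P2 -> has_perfect_matching e T ->
  has_Ffactor F e T.
Proof.
move=> FH2 iso [M [HM uM]].
apply: (@glue F _ M (fun A => A)).
- move=> i j z iM jM zi zj.
  have zT : z \in T.
    by case: (HM i iM) => a [b [aT bT _ iE]]; move: zi; rewrite iE !inE; case/orP => /eqP->.
  case: (uM z zT) => A [_ Au].
  by rewrite -(Au i) ?(Au j).
- move=> z; split.
    by move=> zT; case: (uM z zT) => A [[AM zA] _]; exists A.
  case=> i iM zi; case: (HM i iM) => a [b [aT bT _ iE]].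
  by move: zi; rewrite iE !inE; case/orP => /eqP->.
- move=> i iM; case: (HM i iM) => a [b [aT bT eab ->]].
  exact: pair_factor FH2 iso eab.
Qed.

Lemma pm_extend T x v : has_perfect_matching e T -> x \notin T -> v \notin T ->
  e x v -> has_perfect_matching e ([set x; v] :|: T).
Proof.
move=> [M [HM uM]] xT vT exv.
exists ([set x; v] |: M); split.
- move=> A; case/setU1P => [->|AM].
    by exists x, v; rewrite !inE !eqxx ?orbT.
  case: (HM A AM) => a [b [aT bT eab ->]].
  by exists a, b; rewrite !inE aT bT !orbT.
- move=> z; rewrite inE => /orP[zxv|zT].
    exists [set x; v]; split; first by split => //; apply/setU1P; left.
    move=> A [AM0 zA]; move: AM0; case/setU1P => [->//|AM].
    case: (HM A AM) => a [b [aT bT _ AE]].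
    have zT : z \in T by move: zA; rewrite AE !inE => /orP[]/eqP->.
    by move: zxv; rewrite !inE => /orP[]/eqP Ez; move: xT vT; rewrite -Ez zT.
  case: (uM z zT) => A [[AM zA] Au]; exists A; split.
    by split => //; apply/setU1P; right.
  move=> A' [AM0 zA']; move: AM0; case/setU1P => [AE|A'M]; last by apply: Au.
  by move: zA'; rewrite AE !inE => /orP[]/eqP Ez; move: xT vT; rewrite -Ez zT.
Qed.

Lemma P2factor_pm T : has_Ffactor (fun H => fg_iso H P2) e T -> has_perfect_matching e T.
Proof.
case=> f [fsym fE fC].
exists [set [set y | connect f x y] | x in T]; split.
- move=> A /imsetP[x xT ->].
  case: (fC x xT) => H [[g0 [[h g0h hg0] gE]] [g [ginj gim gEd]]].
  have ftf : f (g (h true)) (g (h false)) by rewrite gEd -gE /= !hg0.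
  case/and3P: (fE _ _ ftf) => pT qT epq.
  exists (g (h true)), (g (h false)); split => //.
  apply/setP => w; apply/idP/idP.
    move/(gim w) => [a <-]; rewrite -[a]g0h !inE.
    by case: (g0 a); rewrite eqxx ?orbT.
  by case/set2P => ->; apply/(gim _); eexists.
- move=> z zT; exists [set y | connect f z y]; split.
    by split; [apply/imsetP; exists z | rewrite inE connect0].
  move=> A [/imsetP[y yT ->]]; rewrite inE => yz.
  apply/setP=> w; rewrite !inE.
  by rewrite (same_connect (sym_connect_sym fsym) yz).
Qed.


Definition hcnt T := cnt (hypomatchable e) T.

Lemma bF_le_h F T : bF F e T <= hcnt T.
Proof.
have -> : bF F e T = cnt (fun C => hypomatchable e C /\ ~ has_Ffactor F e C) T by [].
by apply: cnt_mono => C [].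
Qed.


Lemma main_ind n : forall F S, #|S| < n -> (exists H, F H /\ fg_iso H P2) ->
  (forall X, X \subset S -> bF F e (S :\: X) <= #|X|) -> has_Ffactor F e S.
Proof.
elim: n => // n IH F S Sn [H2 [FH2 isoH2]] cond.
pose A X := hcnt (S :\: X) + #|S :\: X|.
pose sc X := A X * #|S|.+1 + #|X|.
case: (@arg_maxnP _ set0 (fun X => X \subset S) sc (sub0set S)) => X XS Xmax.
have cardD X' : X' \subset S -> #|S :\: X'| = #|S| - #|X'| by move=> h; apply: cardsDS.
have cardle X' : X' \subset S -> #|X'| <= #|S| by move=> h; apply: subset_leq_card.
have scA X' : X' \subset S -> A X' <= A X.
  move=> X'S; have := Xmax X' X'S; rewrite /sc.
  have := cardle _ X'S; have := cardle _ XS.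
  set a1 := A X'; set a2 := A X; nia.

set Hyp := [set C | asbool (is_component e (S :\: X) C /\ hypomatchable e C)].
have mE : #|Hyp| = hcnt (S :\: X) by [].
have HypP C : C \in Hyp -> is_component e (S :\: X) C /\ hypomatchable e C.
  by rewrite inE => /asboolE.
have mX : #|X| <= #|Hyp|.
  have := scA set0 (sub0set S); rewrite /A setD0 (cardD X XS) -mE.
  have := cardle X XS; lia.
have Knh K : is_component e (S :\: X) K -> ~ hypomatchable e K -> has_Ffactor F e K.
  move=> Kc Kn.
  have KS : K \subset S := subset_trans (comp_in Kc) (subsetDl S X).
  case: (eqVneq K S) => [KS'|KnS].
  - exfalso; apply: (Kn).
    have X0 : X = set0.
      apply/setP => x; rewrite inE; apply/negP => xX.
      have xS := subsetP XS x xX; rewrite -KS' in xS.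
      by move: (subsetP (comp_in Kc) x xS); rewrite inE xX.
    have Sc : is_component e S S by move: Kc; rewrite X0 setD0 KS'.
    have h0 : hcnt S = 0.
      apply/eqP; rewrite cards_eq0; apply/eqP/setP => C; rewrite !inE.
      apply/negP => /asboolE [Cc Ch]; apply: (Kn); rewrite KS'.
      case/is_compP: (Cc) => x xS CE.
      have xC : x \in C by rewrite CE comp_self.
      by rewrite -(comp_disj Cc Sc xC xS).
    rewrite KS' => u uS; apply: P2factor_pm.
    apply: (IH (fun H => fg_iso H P2) (S :\ u)).
    + by move: Sn; rewrite (cardsD1 u S) uS; lia.
    + by exists P2; split => //; exact: iso_refl_P2.
    + move=> Y YS.
      apply: leq_trans (bF_le_h _ _) _.
      have E : (S :\ u) :\: Y = S :\: (u |: Y).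
        by apply/setP => z; rewrite !inE; case: (z == u); case: (z \in Y).
      rewrite E.
      have uY : u \notin Y by apply/negP => /(subsetP YS); rewrite !inE eqxx.
      have uYS : u |: Y \subset S.
        apply/subsetP => z; rewrite !inE => /orP[/eqP->//|/(subsetP YS)].
        by rewrite !inE => /andP[_ ->].
      have := Xmax _ uYS; rewrite /sc /A X0 setD0 cards0 addn0 h0 add0n.
      rewrite (cardD _ uYS) cardsU1 uY.
      have := cardle _ uYS; rewrite cardsU1 uY.
      set hh := hcnt _; set N := #|S|; set yy := #|Y|; nia.
  - apply: (IH F K).
    + have : K \proper S by rewrite properEneq KnS KS.
      by move/proper_card; lia.
    + by exists H2.
    + move=> Y YK.
      apply: leq_trans (bF_le_h _ _) _.
      set HKY := [set C | asbool (is_component e (K :\: Y) C /\ hypomatchable e C)].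
      have hKY : #|HKY| = hcnt (K :\: Y) by [].
      rewrite -hKY.
      have XYS : X :|: Y \subset S by rewrite subUset XS (subset_trans YK KS).
      have cardXY : #|X :|: Y| = #|X| + #|Y|.
        rewrite -cardsUI; suff -> : X :&: Y = set0 by rewrite cards0 addn0.
        apply/setP => z; rewrite !inE; apply/negP => /andP[zX zY].
        by move: (subsetP (comp_in Kc) z (subsetP YK z zY)); rewrite inE zX.
      have Hge : #|Hyp| + #|HKY| <= hcnt (S :\: (X :|: Y)).
        have disj : Hyp :&: HKY = set0.
          apply/setP => C; rewrite !inE; apply/negP => /andP[/asboolE[Cc Ch] /asboolE[CKc _]].
          case/is_compP: (CKc) => z zKY CE.
          have zC : z \in C by rewrite CE comp_self.
          have zK : z \in K by move: zKY; rewrite inE => /andP[].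
          by apply: (Kn); rewrite -(comp_disj Cc Kc zC zK).
        rewrite -cardsUI disj cards0 addn0.
        apply: cnt_ge => C; rewrite inE => /orP[CH|CK].
          have [Cc Ch] := HypP C CH; split => //.
          apply: (comp_shrink Cc); last by apply: setDS; apply: subsetUl.
          apply/subsetP => z zC; have zSX := subsetP (comp_in Cc) z zC.
          rewrite !inE negb_or; move: zSX; rewrite inE => /andP[-> ->]; rewrite andbT /=.
          apply/negP => zY; apply: (Kn).
          by rewrite -(comp_disj Cc Kc zC (subsetP YK z zY)).
        move: CK; rewrite inE => /asboolE[CKc Ch]; split => //.
        exact: comp_nest Kc YK CKc.
      have := scA _ XYS; rewrite /A (cardD _ XYS) (cardD _ XS) cardXY -mE.
      have := cardle _ XYS; rewrite cardXY; lia.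

set k := #|Hyp| - #|X|.
pose R (C : {set V}) (b : V + 'I_k) := match b with
  | inl x => (x \in X) && [exists v in C, e x v]
  | inr _ => asbool (has_Ffactor F e C) end.
pose NX (W : {set {set V}}) := [set x in X | [exists C in W, [exists v in C, e x v]]].
have HallC : forall W : {set {set V}}, W \subset Hyp -> #|W| <= #|NB R W|.
  move=> W WH.
  have NXX : NX W \subset X by apply/subsetP => x; rewrite inE => /andP[].
  have NXS : NX W \subset S := subset_trans NXX XS.
  have compW C : C \in W -> is_component e (S :\: NX W) C.
    move=> CW; have [Cc _] := HypP C (subsetP WH C CW).
    apply: (comp_grow Cc NXX) => c z cC zX; apply: contra => ecz.
    rewrite inE zX; apply/existsP; exists C; rewrite CW; apply/existsP; exists c.
    by rewrite cC esym.
  pose L := [set (inl x : V + 'I_k) | x in NX W].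
  have sub1 : L \subset NB R W.
    apply/subsetP => b /imsetP[x xN ->]; rewrite inE.
    move: xN; rewrite inE => /andP[xX /existsP[C /andP[CW ex]]].
    by apply/existsP; exists C; rewrite CW /= xX.
  have c1 : #|L| = #|NX W| by apply: card_imset; exact: inl_inj.
  case: (boolP [exists C in W, asbool (has_Ffactor F e C)]) => [/existsP[C0 /andP[C0W C0g]] | nog].
  - pose Rr := [set (inr i : V + 'I_k) | i : 'I_k].
    have sub2 : Rr \subset NB R W.
      apply/subsetP=> b /imsetP[i _ ->]; rewrite inE; apply/existsP; exists C0.
      by rewrite C0W.
    have c2 : #|Rr| = k by rewrite card_imset ?card_ord //; exact: inr_inj.
    have d12 : L :&: Rr = set0.
      apply/setP => b; rewrite !inE; apply/negP => /andP[/imsetP[x _ ->] /imsetP[i _]] //.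
    have sub12 : L :|: Rr \subset NB R W by rewrite subUset sub1 sub2.
    have HN := subset_leq_card sub12.
    have cU : #|L :|: Rr| = #|NX W| + k by have := cardsUI L Rr; rewrite d12 cards0 addn0 c1 c2.
    have hW : #|W| <= hcnt (S :\: NX W).
      apply: cnt_ge => C CW; split; first exact: compW.
      by have [_ ?] := HypP C (subsetP WH C CW).
    have := scA _ NXS; rewrite /A (cardD _ NXS) (cardD _ XS) -mE.
    have := cardle _ XS; have := subset_leq_card NXX; have kE : k = #|Hyp| - #|X| by []; lia.
  - have hW : #|W| <= bF F e (S :\: NX W).
      apply: (@cnt_ge (fun C => hypomatchable e C /\ ~ has_Ffactor F e C)) => C CW.
      split; first exact: compW.
      split; first by have [_ ?] := HypP C (subsetP WH C CW).
      move=> hf; move/existsPn: nog => /(_ C); rewrite CW /=.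
      by move/asboolE: hf => ->.
    have := cond _ NXS; have := subset_leq_card sub1; rewrite c1; lia.
have [phi [phiinj phiR]] := @hall_ind _ _ _ R Hyp (ltnSn _) HallC.
have surj x : x \in X -> exists2 C, C \in Hyp & phi C = Some (inl x).
  move=> xX.
  pose Im := [set phi C | C in Hyp].
  pose T1 := [set Some (inl y : V + 'I_k) | y in X].
  pose T2 := [set Some (inr i : V + 'I_k) | i : 'I_k].
  pose Tgt := T1 :|: T2.
  have ImT : Im \subset Tgt.
    apply/subsetP => b /imsetP[C CH ->]; case: (phiR C CH) => [[y|i]] -> Ry; rewrite inE; apply/orP.
      by left; apply/imsetP; exists y => //; case/andP: Ry.
    by right; apply/imsetP; exists i.
  have cIm : #|Im| = #|Hyp| := card_in_imset phiinj.
  have cT : #|Tgt| = #|X| + k.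
    have c3 : #|T1| = #|X| by apply: card_imset => a b [].
    have c4 : #|T2| = k by rewrite card_imset ?card_ord // => a b [].
    have d : T1 :&: T2 = set0.
      apply/setP => b; rewrite !inE; apply/negP => /andP[/imsetP[y _ ->] /imsetP[i _]] //.
    by have := cardsUI T1 T2; rewrite d cards0 addn0 c3 c4.
  have : Im == Tgt by rewrite eqEcard ImT cIm cT /k; apply/leP; lia.
  move/eqP => ImE.
  have : Some (inl x) \in Tgt by rewrite inE; apply/orP; left; apply/imsetP; exists x.
  by rewrite -ImE => /imsetP[C CH E]; exists C.

pose blk C := if C \in Hyp then (match phi C with Some (inl x) => x |: C | _ => C end) else C.
have blkP C z : z \in blk C -> z \in C \/ (C \in Hyp /\ phi C = Some (inl z)).
  rewrite /blk; case: (boolP (C \in Hyp)) => CH; last by left.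
  case: (phi C) => [[x|i]|]; try by left.
  by case/setU1P => [->|]; [right|left].
have blkC C : C \subset blk C.
  rewrite /blk; case: (C \in Hyp) => //; case: (phi C) => [[x|i]|] //.
  exact: subsetUr.
have blkx C x : C \in Hyp -> phi C = Some (inl x) -> x \in blk C.
  by rewrite /blk => -> ->; rewrite setU11.
set Ix := [set C | asbool (is_component e (S :\: X) C)].
have IxP C : C \in Ix -> is_component e (S :\: X) C by rewrite inE => /asboolE.
have HypIx C : C \in Hyp -> C \in Ix.
  by move=> CH; rewrite inE; apply/asboolE; case: (HypP C CH).
have phiX C z : C \in Hyp -> phi C = Some (inl z) -> z \in X.
  by move=> CH E; case: (phiR C CH) => b; rewrite E => -[<-] /andP[].
have notX C z : C \in Ix -> z \in C -> z \notin X.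
  move=> CI zC; move: (subsetP (comp_in (IxP C CI)) z zC).
  by rewrite inE => /andP[].
apply: (@glue F _ Ix blk).
- move=> C1 C2 z C1I C2I z1 z2.
  case: (blkP _ _ z1) => [zC1|[H1 E1]]; case: (blkP _ _ z2) => [zC2|[H2' E2]].
  + exact: comp_disj (IxP _ C1I) (IxP _ C2I) zC1 zC2.
  + by move: (notX _ _ C1I zC1); rewrite (phiX _ _ H2' E2).
  + by move: (notX _ _ C2I zC2); rewrite (phiX _ _ H1 E1).
  + by apply: phiinj => //; rewrite E1 E2.
- move=> z; split.
  + move=> zS; case: (boolP (z \in X)) => zX.
      case: (surj z zX) => C CH E; exists C; [exact: HypIx | exact: blkx].
    exists (comp (S :\: X) z).
      by rewrite inE; apply/asboolE; apply: comp_of; rewrite inE zX zS.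
    by apply: (subsetP (blkC _)); exact: comp_self.
  + case=> C CI zC; case: (blkP _ _ zC) => [zC'|[CH E]].
      exact: (subsetP (subset_trans (comp_in (IxP _ CI)) (subsetDl _ _)) _ zC').
    exact: (subsetP XS _ (phiX _ _ CH E)).
- move=> C CI; rewrite /blk; case: (boolP (C \in Hyp)) => CH; last first.
    apply: (Knh _ (IxP _ CI)) => hC; move/negP: CH; apply.
    by rewrite inE; apply/asboolE; split => //; exact: IxP.
  case: (phiR C CH) => b Eb Rb; rewrite Eb.
  case: b Eb Rb => [x|i] Eb Rb /=; last by move/asboolE: Rb.
  case/andP: Rb => xX /existsP[v /andP[vC exv]].
  have [Cc Ch] := HypP C CH.
  have pm := Ch v vC.
  have xC : x \notin C :\ v.
    apply/negP; rewrite !inE => /andP[_ xC].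
    by move: (notX _ _ CI xC); rewrite xX.
  have vC' : v \notin C :\ v by rewrite !inE eqxx.
  have := pm_extend pm xC vC' exv.
  have -> : [set x; v] :|: (C :\ v) = x |: C.
    apply/setP => z; rewrite !inE.
    case: (eqVneq z v) => [->|zv]; first by rewrite vC !orbT.
    by rewrite /= orbF.
  move=> pm'; exact: pm_factor FH2 isoH2 pm'.
Qed.
End G.

Unset Implicit Arguments.
Set Strict Implicit.

Theorem proposition2p1 (F : sgraph -> Prop)
  (HFconn : forall H, F H -> connected_sgraph H)
  (HP2 : exists H, F H /\ fg_iso H P2)
  (V : finType) (e : rel V) (esym : symmetric e) (eirr : irreflexive e) :
  (forall X : {set V}, bF F e (~: X) <= #|X|) ->
  has_Ffactor F e [set: V].
Proof.
move=> cond.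
apply: (@main_ind V e esym eirr #|[set: V]|.+1 F [set: V] (ltnSn _) HP2).
by move=> X _; rewrite setTD; apply: cond.
Qed.
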